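(* Let $\Gamma_1=(V_1,E_1)$ be a graph and let $\Gamma_2=(V_2,E_2)$ be a $\delta$-regular graph. A set $S\subseteq V_1$ is a global offensive $k$-alliance in $\Gamma_1$ if and only if $S\times V_2$ is a global offensive $(k-\delta)$-alliance in $\Gamma_1\times\Gamma_2$.
   Context: Graphs are finite and simple. In a graph $G=(V,E)$, for $S\subseteq V$ and $v\in V$, $\delta_S(v)$ is the number of neighbours of $v$ in $S$, $\overline{S}=V\setminus S$, and $\partial(S)$ the set of vertices of $\overline{S}$ with a neighbour in $S$. A nonempty $S$ is an offensive $k$-alliance in $G$ if $\delta_S(v)\ge\delta_{\overline{S}}(v)+k$ for every $v\in\partial(S)$, and a global offensive $k$-alliance if moreover it is dominating. The Cartesian product $\Gamma_1\times\Gamma_2$ has vertex set $V_1\times V_2$, with $(u,v)\sim(u',v')$ iff either $u=u'$ and $v\sim v'$, or $v=v'$ and $u\sim u'$. *)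

(* Defs.v *)
From mathcomp Require Import all_boot all_order all_algebra.
Set Implicit Arguments. Unset Strict Implicit. Unset Printing Implicit Defensive.
Import Order.TTheory GRing.Theory Num.Theory.

Definition simple_graph (T : finType) (e : rel T) : Prop :=
  irreflexive e /\ symmetric e.

Definition deg_in (T : finType) (e : rel T) (S : {set T}) (v : T) : nat :=
  #|[set u in S | e v u]|.

Definition bdry (T : finType) (e : rel T) (S : {set T}) : {set T} :=
  [set v in ~: S | [exists u in S, e v u]].

Definition offensive_alliance (T : finType) (e : rel T) (k : int) (S : {set T}) : Prop :=
  S != set0 /\
  forall v, v \in bdry e S ->
    ((deg_in e S v)%:Z >= (deg_in e (~: S) v)%:Z + k)%R.

Definition dominating (T : finType) (e : rel T) (S : {set T}) : Prop :=
  forall v, v \notin S -> exists2 u, u \in S & e v u.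

Definition global_offensive_alliance (T : finType) (e : rel T) (k : int) (S : {set T}) : Prop :=
  offensive_alliance e k S /\ dominating e S.

Definition regular (T : finType) (e : rel T) (d : nat) : Prop :=
  forall v, #|[set w | e v w]| = d.

Definition cartesian_prod (T1 T2 : finType) (e1 : rel T1) (e2 : rel T2) : rel (T1 * T2) :=
  fun x y => ((x.1 == y.1) && e2 x.2 y.2) || ((x.2 == y.2) && e1 x.1 y.1).

Definition setXT (T1 T2 : finType) (S : {set T1}) : {set T1 * T2} :=
  setX S [set: T2].

(* Main.v *)
Require Import Defs.
From mathcomp Require Import all_boot all_order all_algebra.
From mathcomp Require Import zify.
Set Implicit Arguments. Unset Strict Implicit. Unset Printing Implicit Defensive.

Section Aux.
Variables (T1 T2 : finType) (e1 : rel T1) (e2 : rel T2) (S : {set T1}).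
Let cp := cartesian_prod e1 e2.

Lemma inXT (x : T1) (y : T2) : ((x, y) \in setXT T2 S) = (x \in S).
Proof. by rewrite /setXT inE /= inE andbT. Qed.

Lemma cp_out (a x : T1) (b y : T2) : a \notin S -> x \in S ->
  cp (a, b) (x, y) = (b == y) && e1 a x.
Proof.
move=> aS xS; rewrite /cp /cartesian_prod /=.
have -> : (a == x) = false by apply/eqP => ax; rewrite ax xS in aS.
by [].
Qed.

Lemma L1 a b : a \notin S -> deg_in cp (setXT T2 S) (a, b) = deg_in e1 S a.
Proof.
move=> aS; rewrite /deg_in.
rewrite -(card_imset [set u in S | e1 a u] (fun x y (h : (x, b) = (y, b)) => f_equal fst h)).
apply: eq_card => [[x y]]; rewrite !inE /=.
apply/idP/imsetP.
- rewrite andbT => /andP [xS]; rewrite cp_out // => /andP [/eqP <- ea].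
  by exists x => //; rewrite inE xS.
- move=> [z]; rewrite inE => /andP [zS ez] [-> ->].
  by rewrite andbT zS cp_out // eqxx.
Qed.

Lemma L2 d a b : simple_graph e2 -> regular e2 d -> a \notin S ->
  deg_in cp (@setC (T1 * T2)%type (setXT T2 S)) (a, b) = (deg_in e1 (~: S) a + d)%N.
Proof.
move=> [irr2 _] reg aS; rewrite /deg_in.
set A := [set x in ~: S | e1 a x].
set B := [set w | e2 b w].
have i1 : injective (fun x : T1 => (x, b)) by move=> x y [].
have i2 : injective (fun y : T2 => (a, y)) by move=> x y [].
rewrite -(reg b) -/B -(card_imset A i1) -(card_imset B i2).
rewrite -cardsUI.
have -> : [set (x, b) | x in A] :&: [set (a, y) | y in B] = set0.
  apply/setP => [[x y]]; rewrite !inE.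
  apply/negP => /andP [/imsetP [z _ [-> ->]] /imsetP [w]].
  by rewrite inE => ew [_ e]; rewrite e irr2 in ew.
rewrite cards0 addn0.
apply: eq_card => [[x y]]; rewrite !inE /= andbT.
apply/idP/orP.
- move=> /andP [xS /orP [/andP [/eqP /= ax ey] | /andP [/eqP /= bx ex]]].
  + by right; apply/imsetP; exists y; rewrite ?inE // ax.
  + by left; apply/imsetP; exists x; rewrite ?inE ?xS // bx.
- case=> /imsetP [z]; rewrite !inE.
  + by move=> /andP [zS ez] [-> ->]; rewrite /cp /cartesian_prod /= zS eqxx ez orbT.
  + by move=> ez [-> ->]; rewrite /cp /cartesian_prod /= aS eqxx ez.
Qed.

Lemma Lbd a b : ((a, b) \in bdry cp (setXT T2 S)) = (a \in bdry e1 S).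
Proof.
rewrite /bdry !inE /= andbT.
case aS: (a \in S) => //=.
apply/existsP/existsP.
- move=> [[x y]] /andP [xS]; rewrite inXT in xS.
  by rewrite cp_out ?aS // => /andP [_ ea]; exists x; rewrite xS.
- move=> [x] /andP [xS ea]; exists (x, b).
  by rewrite inXT xS cp_out ?aS // eqxx.
Qed.
End Aux.

Theorem mainTheorem15 (T1 T2 : finType) (e1 : rel T1) (e2 : rel T2)
  (d : nat) (k : int) (S : {set T1}) :
  simple_graph e1 -> simple_graph e2 -> 0 < #|T2| -> regular e2 d ->
  global_offensive_alliance e1 k S <->
  global_offensive_alliance (cartesian_prod e1 e2) (k - d%:Z)%R (setXT T2 S).
Proof.
move=> g1 g2 /card_gt0P [b0 _] reg.
have bdout : forall a, a \in bdry e1 S -> a \notin S.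
  by move=> a; rewrite /bdry !inE => /andP [].
split.
- move=> [[ne all] dom]; split; [split|].
  + case/set0Pn: ne => x xS; apply/set0Pn; exists (x, b0); by rewrite inXT.
  + move=> [a b]; rewrite Lbd => ab.
    rewrite L1 ?bdout //.
    have -> : deg_in (cartesian_prod e1 e2) (~: setXT T2 S) (a, b) = (deg_in e1 (~: S) a + d)%N.
      by apply: (L2 e1 b g2 reg); apply: bdout.
    move: (all a ab); rewrite !PoszD; lia.
  + move=> [a b]; rewrite inXT => aS; case: (dom a aS) => x xS ea.
    by exists (x, b); rewrite ?inXT // /cartesian_prod /= eqxx ea orbT.
- move=> [[ne all] dom]; split; [split|].
  + case/set0Pn: ne => [[x y]]; rewrite inXT => xS; apply/set0Pn; by exists x.
  + move=> a ab; have := all (a, b0); rewrite Lbd L1 ?bdout //.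
    have -> : deg_in (cartesian_prod e1 e2) (~: setXT T2 S) (a, b0) = (deg_in e1 (~: S) a + d)%N.
      by apply: (L2 e1 b0 g2 reg); apply: bdout.
    move=> h; move: (h ab); rewrite !PoszD; lia.
  + move=> a aS; have := dom (a, b0); rewrite inXT => /(_ aS) [[x y]].
    rewrite inXT => xS /= /orP [/andP [/eqP ax _]|/andP [_ ea]]; last by exists x.
    by move: ax aS => /= ->; rewrite xS.
Qed.
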